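(* Let $p=P_{s,k,g,l}<+\infty$ and let $S$ be an $(s,k,p)$-schedule with $\mathrm{prevr}_{k-1}(r_l)<C_{\max}(S)\le r_l$ and at most $g$ gaps with respect to $[r_s,r_l)$. Then (a) every execution interval of $k$ in $S$ is an internal execution interval with respect to $[r_s,r_l)$, and if $p>0$ then $S$ has exactly $g$ gaps with respect to $[r_s,r_l)$; (b) if $[u,t)$ is an execution interval of $k$ in $S$, $h$ is the number of gaps of $S$ before $u$, and $q$ is the amount of job $k$ scheduled by $S$ in $[r_s,u)$, then $u=U_{s,k,h}(q)$.
   Context: Time is discrete (slots $[t,t+1)$). There are $n$ jobs, job $j$ with integer processing time $p_j\ge1$, release time $r_j$, deadline $d_j$; jobs are indexed so that $d_1<\dots<d_n$, release times are pairwise distinct, and the instance is feasible. A (partial, preemptive) schedule assigns to each slot at most one job so that each job it schedules receives exactly $p_j$ slots in $[r_j,d_j)$, with the earliest-deadline property (whenever busy at slot $t$, run the released, not yet completed scheduled job of smallest deadline). $C_{\max}(S)$ is its completion time. For $s\in\{1,\dots,n\}$, $k\in\{0,\dots,n\}$, an $(s,k)$-schedule is a schedule $S$ with $C_{\max}(S)\le d_k$ scheduling exactly the jobs $j\le k$ with $r_s\le r_j<C_{\max}(S)$; the empty schedule counts, with $C_{\max}=r_s$. Gaps: maximal idle intervals between blocks (maximal busy intervals), plus the idle interval from $r_s$ to the first block if nonempty; gaps with respect to $[r_s,t)$ (for $t\ge C_{\max}(S)$) additionally include $[C_{\max}(S),t)$ if nonempty. For $p\ge0$, an $(s,k,p)$-schedule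 is an $(s,k)$-schedule for the modified instance with $r_k$ replaced by $\max\{r_s,r_k\}$ and $p_k$ by $p$; $U_{s,k,g}(p)$ is the maximum completion time of an $(s,k,p)$-schedule with at most $g$ gaps. $\mathrm{prevr}_{k'}(t)=\max\{r_j:j\le k',\ r_j<t\}$ ($-\infty$ if none). For $k\ge1$, $1\le l\le k-1$ with $r_l\ge r_s$, $P_{s,k,g,l}$ is the minimum $p\ge0$ for which there is an $(s,k,p)$-schedule $S$ with $\mathrm{prevr}_{k-1}(r_l)<C_{\max}(S)\le r_l$ and at most $g$ gaps with respect to $[r_s,r_l)$ ($+\infty$ if none). An execution interval of $k$ in $S$ is an inclusion-maximal interval $[u,v)$ all of whose slots execute $k$; for $C_{\max}(S)\le t$, it is internal with respect to $[r_s,t)$ if (i) slot $v$ is not idle or $v=t$, and (ii) slot $u-1$ is not idle or $u=r_s$. *)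

(* Defs.v *)
(* Time is discrete: slot t is [t,t+1), t : nat.
   Jobs are indexed 1..n; a (partial) schedule is S : nat -> option nat,
   S t = Some j meaning slot t executes job j, None meaning idle. *)
From mathcomp Require Import all_boot.
Set Implicit Arguments. Unset Strict Implicit. Unset Printing Implicit Defensive.

Definition schedule := nat -> option nat.

Definition count_slots (S : schedule) (j a b : nat) : nat :=
  \sum_(a <= x < b) (S x == Some j : nat).

(* A valid preemptive schedule of exactly the jobs in J (instance p r d),
   with the earliest-deadline property. *)
Definition valid_sched (p r d : nat -> nat) (J : pred nat) (S : schedule) : Prop :=
  [/\ (forall t j, S t = Some j -> J j /\ r j <= t < d j),
      (forall j, J j -> count_slots S j (r j) (d j) = p j) &
      (forall t j, S t = Some j ->
         forall i, J i -> r i <= t -> count_slots S i (r i) t < p i -> d j <= d i)].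

(* C is the completion time C_max(S) of S, with C_max = a (= r_s) for the empty schedule *)
Definition is_cmax (S : schedule) (a C : nat) : Prop :=
  (forall x, S x <> None -> x < C) /\
  ((C = a /\ forall x, S x = None) \/ (0 < C /\ S C.-1 <> None)).

Definition feasible (n : nat) (p r d : nat -> nat) : Prop :=
  exists S : schedule,
    (forall t j, S t = Some j -> (1 <= j <= n) /\ r j <= t < d j) /\
    (forall j, 1 <= j <= n -> count_slots S j (r j) (d j) = p j).

Definition instance (n : nat) (p r d : nat -> nat) : Prop :=
  [/\ (forall j, 1 <= j <= n -> 1 <= p j),
      (forall i j, 1 <= i -> i < j -> j <= n -> d i < d j),
      (forall i j, 1 <= i <= n -> 1 <= j <= n -> r i = r j -> i = j) &
      feasible n p r d].

Definition sk_sched (p r d : nat -> nat) (s k : nat) (S : schedule) (C : nat) : Prop :=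
  [/\ is_cmax S (r s) C, C <= d k &
      valid_sched p r d (fun j => (1 <= j <= k) && (r s <= r j < C)) S].

Definition modr (r : nat -> nat) (s k : nat) : nat -> nat :=
  fun j => if j == k then maxn (r s) (r k) else r j.
Definition modp (p : nat -> nat) (k q : nat) : nat -> nat :=
  fun j => if j == k then q else p j.

Definition skp_sched (p r d : nat -> nat) (s k q : nat) (S : schedule) (C : nat) : Prop :=
  sk_sched (modp p k q) (modr r s k) d s k S C.

(* number of gaps of S with respect to [a,b): maximal idle intervals inside
   [a,b), counted by their first slot *)
Definition gaps (S : schedule) (a b : nat) : nat :=
  \sum_(a <= x < b) ((S x == None) && ((x == a) || (S x.-1 != None)) : nat).

(* IsU ... g q u  <->  u = U_{s,k,g}(q) *)
Definition IsU (p r d : nat -> nat) (s k g q u : nat) : Prop :=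
  (exists S, skp_sched p r d s k q S u /\ gaps S (r s) u <= g) /\
  (forall S C, skp_sched p r d s k q S C -> gaps S (r s) C <= g -> C <= u).

(* prevr_{k'}(t) = max { r_j : 1 <= j <= k', r_j < t }, None standing for -infinity *)
Definition prevr (r : nat -> nat) (k' t : nat) : option nat :=
  let sq := [seq r j | j <- iota 1 k' & r j < t] in
  if sq is [::] then None else Some (\max_(x <- sq) x).

Definition opt_lt (o : option nat) (c : nat) : bool :=
  if o is Some v then v < c else true.

Definition P_sched (p r d : nat -> nat) (s k g l q : nat) (S : schedule) (C : nat) : Prop :=
  [/\ skp_sched p r d s k q S C, opt_lt (prevr r k.-1 (r l)) C, C <= r l &
      gaps S (r s) (r l) <= g].

(* IsP ... q  <->  q = P_{s,k,g,l} < +infinity *)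
Definition IsP (p r d : nat -> nat) (s k g l q : nat) : Prop :=
  (exists S C, P_sched p r d s k g l q S C) /\
  (forall q', q' < q -> forall S C, ~ P_sched p r d s k g l q' S C).

Definition exec_interval (S : schedule) (k u v : nat) : Prop :=
  [/\ u < v, (forall x, u <= x < v -> S x = Some k),
      (u = 0 \/ S u.-1 <> Some k) & S v <> Some k].

Definition internal (S : schedule) (a t u v : nat) : Prop :=
  (S v <> None \/ v = t) /\ (S u.-1 <> None \/ u = a).

(* Main.v *)
Require Import Defs.
From mathcomp Require Import all_boot zify.
Set Implicit Arguments. Unset Strict Implicit. Unset Printing Implicit Defensive.

Lemma count_split S j a b c : a <= b -> b <= c ->
  count_slots S j a c = count_slots S j a b + count_slots S j b c.
Proof. by move=> ab bc; rewrite /count_slots (@big_cat_nat _ _ _ b). Qed.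

Lemma count_succ S j a b : a <= b ->
  count_slots S j a b.+1 = count_slots S j a b + (S b == Some j).
Proof. by move=> ab; rewrite /count_slots big_nat_recr. Qed.

Lemma count_le_len S j a b : count_slots S j a b <= b - a.
Proof.
rewrite /count_slots; apply: leq_trans (_ : \sum_(a <= x < b) 1 <= _).
  by apply: leq_sum => x _; case: (_ == _).
by rewrite sum_nat_const_nat muln1.
Qed.

Lemma count_ext S S' j a b : (forall x, a <= x < b -> S x = S' x) ->
  count_slots S j a b = count_slots S' j a b.
Proof. by move=> h; apply: eq_big_nat => x /h ->. Qed.

Lemma count_zero S j a b : (forall x, a <= x < b -> S x <> Some j) ->
  count_slots S j a b = 0.
Proof.
move=> h; rewrite /count_slots big1_seq // => x; rewrite mem_index_iota => /h.
by case: eqP.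
Qed.

Lemma count_pos_ex S j a b : 0 < count_slots S j a b ->
  exists x, a <= x < b /\ S x = Some j.
Proof.
move=> h; case: (boolP [exists x : 'I_b, (a <= x) && (S x == Some j)]).
  by case/existsP=> x /andP [ax /eqP e]; exists x; rewrite ax ltn_ord.
rewrite negb_exists => /forallP hn.
move: h; rewrite count_zero // => x /andP [ax xb] e.
by move: (hn (Ordinal xb)); rewrite /= ax e eqxx.
Qed.

Lemma count_mono S j a b c : b <= c -> count_slots S j a b <= count_slots S j a c.
Proof.
move=> bc; case: (leqP a b) => ab.
  by rewrite (count_split S j ab bc) leq_addr.
by rewrite /count_slots big_geq ?(ltnW ab).
Qed.

Lemma count_from S j a b : (forall x, S x = Some j -> a <= x) ->
  count_slots S j a b = count_slots S j 0 b.
Proof.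
move=> h; case: (leqP a b) => ab.
  rewrite (@count_split S j 0 a b) // (@count_zero S j 0 a) // => x /andP [_ xa] /h.
  by rewrite leqNgt xa.
rewrite /count_slots big_geq ?(ltnW ab) // -/(count_slots S j 0 b) count_zero //.
by move=> x /andP [_ xb] /h; lia.
Qed.

Lemma count_upto S j a b e : (forall x, S x = Some j -> x < e) -> e <= b ->
  count_slots S j a b = count_slots S j a e.
Proof.
move=> h eb; case: (leqP a e) => ae.
  rewrite (count_split S j ae eb) (@count_zero S j e b) ?addn0 // => x /andP [ex _] /h.
  by rewrite ltnNge ex.
rewrite /count_slots (big_geq (ltnW ae)) -/(count_slots S j a b) count_zero //.
by move=> x /andP [ax _] /h; lia.
Qed.

Lemma sum_ind_le (o : option nat) lo hi (P : pred nat) :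
  \sum_(lo <= i < hi | P i) (o == Some i : nat) <= 1.
Proof.
case: o => [j|]; last by rewrite big1.
apply: leq_trans (_ : \sum_(i <- index_iota lo hi | i == j) 1 <= _).
  rewrite big_mkcond [X in _ <= X]big_mkcond /=; apply: leq_sum => i _.
  by case: (P i); case: eqP => // [[->]]; rewrite eqxx.
rewrite sum1_count (count_uniq_mem _ (iota_uniq _ _)); by case: (_ \in _).
Qed.

Lemma sum_jobs_le S lo hi (P : pred nat) a b :
  \sum_(lo <= i < hi | P i) count_slots S i a b <= b - a.
Proof.
rewrite /count_slots exchange_big_nat /=.
apply: leq_trans (_ : \sum_(a <= x < b) 1 <= _); last by rewrite sum_nat_const_nat muln1.
by apply: leq_sum => x _; apply: sum_ind_le.
Qed.

Definition gterm (S : schedule) a x : nat :=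
  (S x == None) && ((x == a) || (S x.-1 != None)).

Lemma gaps_split S a b c : a <= b -> b <= c ->
  gaps S a c = gaps S a b + \sum_(b <= x < c) gterm S a x.
Proof. by move=> ab bc; rewrite /gaps (@big_cat_nat _ _ _ b). Qed.

Lemma gaps_mono S a b c : b <= c -> gaps S a b <= gaps S a c.
Proof.
move=> bc; case: (leqP a b) => ab.
  by rewrite (gaps_split S ab bc) leq_addr.
by rewrite /gaps big_geq ?(ltnW ab).
Qed.

Lemma cmax_exists (Q : schedule) a B :
  (forall y, Q y <> None -> a <= y < B) -> a <= B ->
  exists C', is_cmax Q a C' /\ a <= C' <= B.
Proof.
elim: B => [|B IH] h aB.
  exists a; split; last by lia.
  split; last by left; split=> // x; case e: (Q x) => //; have /andP[] := h x ltac:(by rewrite e); lia.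
  by move=> x /h; lia.
case: (eqVneq a B.+1) => [eaB|neaB].
  exists a; split; last by lia.
  split; first by move=> x /h; lia.
  left; split=> // x; case e: (Q x) => //; have /andP[] := h x ltac:(by rewrite e); lia.
case e: (Q B) => [j|].
  exists B.+1; split; last by lia.
  split; first by move=> x /h; lia.
  by right; split=> //=; rewrite e.
have aB' : a <= B by move/eqP: neaB; lia.
have [|C' [hc hb]] := IH _ aB'.
  move=> y qy; have := h y qy; case: (eqVneq y B) => [ey|ney]; last by lia.
  by move: qy; rewrite ey e.
by exists C'; split=> //; lia.
Qed.

Lemma max_in (s : seq nat) : s != [::] -> \max_(x <- s) x \in s.
Proof.
elim: s => // x s IH _; rewrite big_cons in_cons.
case: s IH => [|y s] IH; first by rewrite big_nil maxn0 eqxx.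
set m := \max_(z <- y :: s) z in IH *.
case: (leqP m x) => hm.
  by rewrite eqxx.
by rewrite IH ?orbT.
Qed.

Lemma prevr_some r k' t v : prevr r k' t = Some v ->
  exists j, 1 <= j <= k' /\ r j < t /\ v = r j.
Proof.
rewrite /prevr; set sq := [seq _ | _ <- _ & _].
case E: sq => [|x s] //= [<-]; have: \max_(y <- x :: s) y \in sq.
  by rewrite E max_in.
case/mapP=> j; rewrite mem_filter mem_iota => /andP [rj hj] ->.
exists j; split; [lia | by []].
Qed.

Lemma modr_s r s k : modr r s k s = r s.
Proof. by rewrite /modr; case: eqP => // ->; rewrite maxnn. Qed.

Lemma modr_ne r s k j : j != k -> modr r s k j = r j.
Proof. by rewrite /modr => /negbTE ->. Qed.

Lemma modp_ne p k q j : j != k -> modp p k q j = p j.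
Proof. by rewrite /modp => /negbTE ->. Qed.

Lemma valid_J_ext p r d (J J' : pred nat) S : (forall j, J j = J' j) ->
  valid_sched p r d J S -> valid_sched p r d J' S.
Proof.
move=> e [h1 h2 h3]; split.
- by move=> t j /h1 []; rewrite e.
- by move=> j; rewrite -e; apply: h2.
- by move=> t j ej i; rewrite -e; apply: h3.
Qed.

Lemma shrink n p r d s k g l qN C (Q : schedule) :
  instance n p r d -> 1 <= k <= n -> r s <= C ->
  C <= d k -> C <= r l -> opt_lt (prevr r k.-1 (r l)) C ->
  (forall y, Q y <> None -> r s <= y < C) ->
  valid_sched (modp p k qN) (modr r s k) d
     (fun j => (1 <= j <= k) && (r s <= modr r s k j < C)) Q ->
  gaps Q (r s) (r l) <= g ->
  exists C', P_sched p r d s k g l qN Q C'.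
Proof.
move=> inst hk hsC hCd hCl hpr hQ hval hg.
have [h1 h2 h3] : valid_sched (modp p k qN) (modr r s k) d
     (fun j => (1 <= j <= k) && (modr r s k s <= modr r s k j < C)) Q.
  by apply: valid_J_ext hval => j; rewrite modr_s.
have [C' [hc /andP [hsC' hC'C]]] := cmax_exists hQ hsC.
have busy : forall y, Q y <> None -> y < C' by case: hc.
have JJ : forall j, (1 <= j <= k) && (modr r s k s <= modr r s k j < C') ->
   (1 <= j <= k) && (modr r s k s <= modr r s k j < C).
  by move=> j /andP [-> /andP [-> hj]]; rewrite (leq_trans hj hC'C).
exists C'; split.
- split; [by rewrite modr_s | by apply: leq_trans hCd | split].
  + move=> t j e; have [/andP [-> /andP [-> _]] hw] := h1 t j e.
    split=> //; case/andP: hw => hw _; rewrite (leq_ltn_trans hw) //.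
    by apply: busy; rewrite e.
  + by move=> j /JJ; apply: h2.
  + by move=> t j e i /JJ; apply: h3 e i.
- move: hpr; case E: (prevr r k.-1 (r l)) => [v|] //= hv.
  have [j [hj [hjl ev]]] := prevr_some E; subst v.
  case: (ltnP (r j) (r s)) => hjs; first by apply: leq_trans hjs hsC'.
  have jk : j != k by apply/eqP => ejk; subst j; case/andP: hk => h _; lia.
  have Jj : (1 <= j <= k) && (modr r s k s <= modr r s k j < C).
    rewrite modr_s modr_ne // hjs hv; case/andP: hk; lia.
  have := h2 j Jj; rewrite modp_ne // modr_ne // => hc2.
  case: inst => hp _ _ _.
  have : 0 < count_slots Q j (r j) (d j) by rewrite hc2; apply: hp; case/andP: hk; lia.
  case/count_pos_ex => x [/andP [hx _] ex].
  by apply: leq_ltn_trans hx _; apply: busy; rewrite ex.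
- by apply: leq_trans hC'C hCl.
- exact: hg.
Qed.

Definition remk (S : schedule) y : schedule := fun x => if x == y then None else S x.

Lemma count_ext_ind S S' j a b :
  (forall x, a <= x < b -> (S x == Some j) = (S' x == Some j)) ->
  count_slots S j a b = count_slots S' j a b.
Proof. by move=> h; apply: eq_big_nat => x /h ->. Qed.

Lemma count_rem S j y a b : S y = Some j -> a <= y < b ->
  count_slots S j a b = (count_slots (remk S y) j a b).+1.
Proof.
move=> e /andP [ay yb].
have s1 := @count_split S j a y b ay (ltnW yb).
have s2 := @count_split (remk S y) j a y b ay (ltnW yb).
have s3 := @count_split S j y y.+1 b (leqnSn y) yb.
have s4 := @count_split (remk S y) j y y.+1 b (leqnSn y) yb.
have e1 : count_slots (remk S y) j a y = count_slots S j a y.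
  by apply: count_ext => x /andP [_ xy]; rewrite /remk (ltn_eqF xy).
have e2 : count_slots (remk S y) j y.+1 b = count_slots S j y.+1 b.
  by apply: count_ext => x /andP [yx _]; rewrite /remk (gtn_eqF yx).
have e3 : count_slots S j y y.+1 = 1 by rewrite /count_slots big_nat1 e eqxx.
have e4 : count_slots (remk S y) j y y.+1 = 0 by rewrite /count_slots big_nat1 /remk eqxx.
rewrite s1 s2 s3 s4 e1 e2 e3 e4; lia.
Qed.

Lemma count_rem_other S j y a b : S y <> Some j ->
  count_slots (remk S y) j a b = count_slots S j a b.
Proof.
move=> ne; apply: count_ext_ind => x _; rewrite /remk.
case: (eqVneq x y) => [->|//] /=.
case E: (S y) => [j'|] //; case: (Some j' =P Some j) => [[e]|_]; [by rewrite E e in ne | by []].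
Qed.

Lemma dmono n p r d i j : instance n p r d -> 1 <= i -> i <= j -> j <= n -> d i <= d j.
Proof.
case=> _ hd _ _ hi ij jn; case: (ltnP i j) => ij'; first by apply: ltnW; apply: hd.
by have -> : i = j by lia.
Qed.

Lemma sum_pt_le (F G : nat -> nat) a b y c :
  (forall x, x != y -> F x <= G x) -> F y <= G y + c ->
  \sum_(a <= x < b) F x <= \sum_(a <= x < b) G x + c.
Proof.
move=> h hy.
apply: leq_trans (_ : \sum_(a <= x < b) (G x + c * (x == y)) <= _).
  apply: leq_sum => x _; case: (eqVneq x y) => [->|ne]; first by rewrite muln1.
  by rewrite muln0 addn0 h.
rewrite big_split /= leq_add2l -big_distrr /=.
apply: leq_trans (_ : c * 1 <= _); last by rewrite muln1.
rewrite leq_mul2l; apply/orP; right.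
apply: leq_trans (sum_ind_le (Some y) a b predT); rewrite /= leq_eqVlt; apply/orP; left.
by apply/eqP; apply: eq_bigr => x _; rewrite eq_sym; case: eqP => [->|ne]; case: eqP => // [[]].
Qed.

Lemma sum3 (F : nat -> nat) a b y : a <= y -> y.+2 <= b ->
  \sum_(a <= x < b) F x = \sum_(a <= x < y) F x + F y + F y.+1 + \sum_(y.+2 <= x < b) F x.
Proof.
move=> ay yb; rewrite (@big_cat_nat _ _ _ y) //; last by lia.
rewrite (@big_cat_nat _ _ _ y.+2 y) //; last by lia.
rewrite (@big_cat_nat _ _ _ y.+1 y y.+2) // !big_nat1 /=; lia.
Qed.

Lemma gterm_rem S a y x : x != y -> x != y.+1 -> gterm (remk S y) a x = gterm S a x.
Proof.
move=> n1 n2; rewrite /gterm /remk (negbTE n1).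
case: (eqVneq x.-1 y) => [e|] //; exfalso.
by case: x n1 n2 e => [|x] /= n1 n2 e; [rewrite -e eqxx in n1 | rewrite e eqxx in n2].
Qed.

Lemma gterm_rem_succ S a y : y.+1 != a -> gterm (remk S y) a y.+1 = 0.
Proof. by move=> ne; rewrite /gterm /remk /= eqxx (negbTE ne) /=; case: (_ == None). Qed.

Lemma gterm_le1 S a x : gterm S a x <= 1.
Proof. by rewrite /gterm; case: (_ && _). Qed.

Lemma gapsE S a b : gaps S a b = \sum_(a <= x < b) gterm S a x.
Proof. by []. Qed.

Lemma gaps_rem_gen S a b y : a <= y -> gaps (remk S y) a b <= gaps S a b + 1.
Proof.
move=> ay; rewrite !gapsE; apply: (@sum_pt_le _ _ a b y) => [x ne|]; last by rewrite (leq_trans (gterm_le1 _ _ _)) // leq_addl.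
case: (eqVneq x y.+1) => [->|ne2]; first by rewrite gterm_rem_succ //; lia.
by rewrite gterm_rem.
Qed.

Lemma gaps_rem_start S a b y : a < y -> S y.-1 = None -> gaps (remk S y) a b <= gaps S a b.
Proof.
move=> ay hy; rewrite !gapsE -[X in _ <= X]addn0; apply: (@sum_pt_le _ _ a b y) => [x ne|].
  case: (eqVneq x y.+1) => [->|ne2]; first by rewrite gterm_rem_succ //; lia.
  by rewrite gterm_rem.
rewrite addn0 /gterm /remk eqxx /=.
have -> : (y == a) = false by apply/eqP; lia.
have -> : (y.-1 == y) = false by apply/eqP; lia.
by rewrite hy.
Qed.

Lemma gaps_rem_end S a b y : a <= y -> y.+1 < b -> S y <> None -> S y.+1 = None ->
  gaps (remk S y) a b <= gaps S a b.
Proof.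
move=> ay yb hy hy1; rewrite !gapsE (sum3 _ ay yb) (sum3 _ ay yb).
have e1 : forall x, a <= x < y -> gterm (remk S y) a x = gterm S a x.
  by move=> x /andP [_ xy]; rewrite gterm_rem //; apply/eqP; lia.
have e2 : forall x, y.+2 <= x < b -> gterm (remk S y) a x = gterm S a x.
  by move=> x /andP [yx _]; rewrite gterm_rem //; apply/eqP; lia.
rewrite (eq_big_nat _ _ e1) (eq_big_nat _ _ e2) gterm_rem_succ; last by apply/eqP; lia.
have -> : gterm S a y.+1 = 1.
  by rewrite /gterm hy1 /=; case E: (S y) hy => [j|] // _; rewrite orbT.
have := gterm_le1 (remk S y) a y; lia.
Qed.

Definition JC r s k C := fun j => (1 <= j <= k) && (r s <= modr r s k j < C).

Lemma Pfacts p r d s k g l q S C : P_sched p r d s k g l q S C ->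
  (forall y, S y <> None -> r s <= y < C) /\ C <= d k /\ C <= r l /\
      opt_lt (prevr r k.-1 (r l)) C /\ gaps S (r s) (r l) <= g /\
      r s <= C /\ valid_sched (modp p k q) (modr r s k) d (JC r s k C) S.
Proof.
case=> [[hc hCd hv] hpr hCl hg].
have hv' : valid_sched (modp p k q) (modr r s k) d (JC r s k C) S.
  by apply: valid_J_ext hv => j; rewrite /JC modr_s.
have busy : forall y, S y <> None -> r s <= y < C.
  move=> y hy; case: hc => hb _; rewrite hb //.
  case E: (S y) hy => [j|] // _; case: hv' => h1 _ _.
  case: (h1 _ _ E); rewrite /JC => /andP [_ /andP [h _]] /andP [h' _]; rewrite andbT; exact: leq_trans h h'.
do 6 (split=> //).
case: hc => _ [[e _]|[hC0 hC]]; first by rewrite e modr_s.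
by have /andP [h _] := busy _ hC; lia.
Qed.

Lemma remove_k n p r d s k g l q S C y :
  instance n p r d -> 1 <= k <= n -> P_sched p r d s k g l q S C -> S y = Some k ->
  gaps (remk S y) (r s) (r l) <= g ->
  0 < q /\ exists C', P_sched p r d s k g l q.-1 (remk S y) C'.
Proof.
move=> inst hk hP ey hg; case: (Pfacts hP) => busy [hCd [hCl [hpr [_ [hsC [h1 h2 h3]]]]]].
have [Jk /andP [hyk hyd]] := h1 _ _ ey.
have hq : count_slots S k (modr r s k k) (d k) = q by rewrite h2 // /modp eqxx.
have yr : modr r s k k <= y < d k by rewrite hyk.
split; first by rewrite -hq (count_rem ey yr).
apply: (@shrink n p r d s k g l q.-1 C) => //.
- by move=> x; rewrite /remk; case: eqP => // _ /busy.
split.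
- by move=> t j; rewrite /remk; case: eqP => // _ /h1.
- move=> j Jj; case: (eqVneq j k) => [ejk|njk].
    subst j; rewrite /modp eqxx -hq (count_rem ey yr) //.
  rewrite count_rem_other; last by rewrite ey => [[e]]; rewrite e eqxx in njk.
  by rewrite h2 // !modp_ne.
- move=> t j; rewrite /remk; case: eqP => // _ etj i Ji hri.
  case: (eqVneq i k) => [->|nik] hc.
    have [/andP [/andP [j1 jk] _] _] := h1 _ _ etj.
    by apply: (dmono inst j1 jk); case/andP: hk.
  apply: (h3 _ _ etj i Ji hri).
  move: hc; rewrite count_rem_other ?modp_ne //.
  by rewrite ey => [[e]]; rewrite e eqxx in nik.
Qed.

Lemma valid_modp_irrel p r d (J : pred nat) k q q' S :
  (forall j, J j -> j != k) ->
  valid_sched (modp p k q) r d J S -> valid_sched (modp p k q') r d J S.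
Proof.
move=> hJ [h1 h2 h3]; split=> //.
- by move=> j Jj; rewrite modp_ne ?hJ // h2 // modp_ne ?hJ.
- by move=> t j e i Ji; rewrite modp_ne ?hJ //; move: (h3 t j e i Ji); rewrite modp_ne ?hJ.
Qed.

Lemma partA n p r d s k g l q S C :
  instance n p r d ->
  1 <= s <= n -> 1 <= k <= n -> 1 <= l <= k.-1 -> r s <= r l ->
  IsP p r d s k g l q ->
  P_sched p r d s k g l q S C ->
  ((forall u v, exec_interval S k u v -> internal S (r s) (r l) u v) /\
   (0 < q -> gaps S (r s) (r l) = g)).
Proof.
move=> inst hs hk hl hsl [_ hmin] hP.
have contra : forall y, S y = Some k -> gaps (remk S y) (r s) (r l) <= g -> False.
  move=> y ey hg; have [q0 [C' hP']] := remove_k inst hk hP ey hg.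
  by apply: (hmin q.-1 _ _ _ hP'); lia.
case: (Pfacts hP) => busy [hCd [hCl [hpr [hg [hsC [h1 h2 h3]]]]]].
split.
- move=> u v [huv hin hu hv]; split.
  + case E: (S v) => [j|]; first by left.
    case: (eqVneq v (r l)) => [|nvl]; first by right.
    exfalso; have ey : S v.-1 = Some k by apply: hin; lia.
    apply: (contra _ ey); apply: leq_trans hg.
    have /andP [h _] := busy _ (ltac:(by rewrite ey) : S v.-1 <> None).
    have /andP [_ h'] := busy _ (ltac:(by rewrite ey) : S v.-1 <> None).
    apply: gaps_rem_end => //; first by move/eqP: nvl; lia.
      by rewrite ey.
    by rewrite prednK //; lia.
  + case E: (S u.-1) => [j|]; first by left.
    case: (eqVneq u (r s)) => [|nus]; first by right.
    exfalso; have ey : S u = Some k by apply: hin; lia.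
    apply: (contra _ ey); apply: leq_trans hg.
    have /andP [h _] := busy _ (ltac:(by rewrite ey) : S u <> None).
    apply: gaps_rem_start => //; by move/eqP: nus; lia.
- move=> q0; apply/eqP; rewrite eqn_leq hg /=; rewrite leqNgt; apply/negP => hlt.
  case: (boolP (JC r s k C k)) => Jk.
    have := h2 _ Jk; rewrite /modp eqxx => hq.
    have : 0 < count_slots S k (modr r s k k) (d k) by rewrite hq.
    case/count_pos_ex => y [/andP [hy1 _] ey].
    apply: (contra _ ey); apply: leq_trans (gaps_rem_gen _ _ _) _.
      by have /andP [] := busy y ltac:(by rewrite ey).
    by rewrite addn1.
  apply: (hmin q.-1 _ S C); first by lia.
  case: hP => [[hc hCd' hv] hpr' hCl' hg'].
  split=> //; split=> //; apply: valid_modp_irrel hv => j Jj.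
  apply/eqP => ejk; subst j; move: Jk; rewrite /JC modr_s in Jj *.
  by rewrite Jj.
Qed.

Lemma term_le_sum (F : nat -> nat) (P : pred nat) lo hi j :
  lo <= j < hi -> P j -> F j <= \sum_(lo <= i < hi | P i) F i.
Proof.
move=> hj Pj; rewrite big_mkcond (bigD1_seq j) ?mem_index_iota ?iota_uniq //=.
by rewrite Pj leq_addr.
Qed.

Lemma sum_eq0_term (F : nat -> nat) (P : pred nat) lo hi j :
  \sum_(lo <= i < hi | P i) F i = 0 -> lo <= j < hi -> P j -> F j = 0.
Proof. by move=> h hj Pj; apply/eqP; rewrite -leqn0 -h term_le_sum. Qed.

Definition pickA (isA : pred nat) (p r : nat -> nat) (k y : nat) (c : nat -> nat) : option nat :=
  let m := find (fun i => isA i && (r i <= y) && (c i < p i)) (iota 1 k.-1) in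
  if m < k.-1 then Some m.+1 else Some k.

Lemma pick_spec (isA : pred nat) p r k y c j : (forall i, isA i -> 0 < i < k) ->
  pickA isA p r k y c = Some j ->
  (j = k /\ forall i, isA i -> r i <= y -> p i <= c i) \/
  [/\ isA j, r j <= y, c j < p j & forall i, isA i -> r i <= y -> c i < p i -> j <= i].
Proof.
move=> hA; rewrite /pickA.
set P := (fun i => isA i && (r i <= y) && (c i < p i)).
case: ltnP => hm [<-].
  right; have := @nth_find _ 0 P (iota 1 k.-1).
  rewrite has_find size_iota => /(_ hm); rewrite nth_iota // add1n /P => /andP [/andP [-> ->] ->].
  split=> // i Ai ri ci; rewrite ltnNge; apply/negP => lt.
  have hi := hA i Ai.
  have := @before_find _ 0 P (iota 1 k.-1) i.-1; rewrite nth_iota; last by lia.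
  rewrite !add1n (prednK (ltac:(lia) : 0 < i)).
  by rewrite /P Ai ri ci => /(_ lt).
left; split=> // i Ai ri; rewrite leqNgt; apply/negP => ci.
have : ~~ has P (iota 1 k.-1) by rewrite has_find size_iota -leqNgt.
move/hasPn => /(_ i) h.
have hi : i \in iota 1 k.-1 by rewrite mem_iota; have := hA i Ai; lia.
by have := h hi; rewrite /P Ai ri ci.
Qed.

Fixpoint cst (step : nat -> (nat -> nat) -> option nat) (y : nat) : nat -> nat :=
  match y with
  | 0 => fun _ => 0
  | y'.+1 => let c := cst step y' in fun i => c i + (step y' c == Some i)
  end.

Definition Nsch step : schedule := fun y => step y (cst step y).

Lemma cst_count step y i : cst step y i = count_slots (Nsch step) i 0 y.
Proof.
elim: y => [|y IH]; first by rewrite /count_slots big_geq.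
by rewrite count_succ // -IH.
Qed.

Lemma count_all S j a b : (forall x, a <= x < b -> S x = Some j) -> count_slots S j a b = b - a.
Proof.
move=> h; rewrite /count_slots (eq_big_nat _ _ (F2 := fun _ => 1)).
  by rewrite sum_nat_const_nat muln1.
by move=> x /h ->; rewrite eqxx.
Qed.

Lemma SKfacts p r d s k q S C : skp_sched p r d s k q S C ->
  (forall y, S y <> None -> r s <= y < C) /\ C <= d k /\ r s <= C /\
  valid_sched (modp p k q) (modr r s k) d (JC r s k C) S.
Proof.
case=> [hc hCd hv].
have hv' : valid_sched (modp p k q) (modr r s k) d (JC r s k C) S.
  by apply: valid_J_ext hv => j; rewrite /JC modr_s.
have busy : forall y, S y <> None -> r s <= y < C.
  move=> y hy; case: hc => hb _; rewrite hb //.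
  case E: (S y) hy => [j|] // _; case: hv' => h1 _ _.
  case: (h1 _ _ E); rewrite /JC => /andP [_ /andP [h _]] /andP [h' _]; rewrite andbT; exact: leq_trans h h'.
do 3 (split=> //).
case: hc => _ [[e _]|[hC0 hC]]; first by rewrite e modr_s.
by have /andP [h _] := busy _ hC; lia.
Qed.

Lemma dlt n p r d i j : instance n p r d -> 0 < i -> i < j -> j <= n -> d i < d j.
Proof. by case=> _ hd _ _; apply: hd. Qed.

Lemma Sfacts n p r d s k g l q S C u t :
  instance n p r d -> 0 < k <= n -> P_sched p r d s k g l q S C ->
  u < t -> (forall x, u <= x < t -> S x = Some k) ->
  [/\ r s <= modr r s k k <= u, t <= C &
   forall i, 0 < i < k -> r s <= r i -> r i < t ->
     [/\ r i < u, count_slots S i (r i) u = p i & forall x, S x = Some i -> x < u]].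
Proof.
move=> inst hk hP hut hin.
case: (Pfacts hP) => busy [hCd [hCl [hpr [hg [hsC [h1 h2 h3]]]]]].
have eu : S u = Some k by apply: hin; rewrite leqnn.
have [Jk /andP [hku _]] := h1 _ _ eu.
have ht1 : S t.-1 = Some k by apply: hin; lia.
have /andP [_ htC] := busy t.-1 ltac:(by rewrite ht1).
split.
- by move: Jk; rewrite /JC => /andP [_ /andP [-> _]].
- lia.
move=> i hi hsi hit.
have nik : i != k by apply/eqP => e; subst; lia.
have Ji : JC r s k C i by rewrite /JC modr_ne // hsi; apply/andP; split; [lia | apply/andP; split; lia].
have pi1 : 0 < p i by case: inst => hp _ _ _; apply: hp; lia.
have dik : d i < d k by apply: (dlt inst); lia.
have hru : r i < u.
  rewrite ltnNge; apply/negP => ur.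
  have := h3 _ _ (hin (r i) ltac:(lia)) i Ji; rewrite modr_ne // modp_ne // /count_slots big_geq //.
  by move=> /(_ (leqnn _) pi1); lia.
have slots_d : forall x, S x = Some i -> x < d i.
  by move=> x /h1 [_]; rewrite modr_ne // => /andP [].
have hcle : count_slots S i (r i) u <= p i.
  have := h2 i Ji; rewrite modr_ne // modp_ne // => <-.
  case: (leqP u (d i)) => ud; first exact: count_mono.
  by rewrite (@count_upto S i (r i) u (d i) slots_d (ltnW ud)).
have hcge : p i <= count_slots S i (r i) u.
  rewrite leqNgt; apply/negP => hlt.
  by have := h3 _ _ eu i Ji; rewrite modr_ne // modp_ne // => /(_ (ltnW hru) hlt); lia.
have hcu : count_slots S i (r i) u = p i by apply/eqP; rewrite eqn_leq hcle hcge.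
split=> // x ex; rewrite ltnNge; apply/negP => ux.
have [_] := h1 _ _ ex; rewrite modr_ne // => /andP [rx xd].
have := h2 i Ji; rewrite modr_ne // modp_ne //.
have := @count_mono S i (r i) x.+1 (d i) xd.
rewrite count_succ // ex eqxx.
have := @count_mono S i (r i) u x ux; lia.
Qed.

Lemma partB_exists n p r d s k g l q S C u t :
  instance n p r d -> 0 < k <= n -> P_sched p r d s k g l q S C ->
  exec_interval S k u t -> internal S (r s) (r l) u t ->
  exists S', skp_sched p r d s k (count_slots S k (r s) u) S' u /\
     gaps S' (r s) u <= gaps S (r s) u.
Proof.
move=> inst hk hP [hut hin _ _] [_ hint].
case: (Pfacts hP) => busy [hCd [hCl [hpr [hg [hsC [h1 h2 h3]]]]]].
have [/andP [hsk hku] htC hA] := Sfacts inst hk hP hut hin.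
set q' := count_slots S k (r s) u.
set Su : schedule := fun x => if x < u then S x else None.
have Sub : forall x, Su x <> None -> x < u by move=> x; rewrite /Su; case: ltnP.
have SuS : forall j x, Su x = Some j -> S x = Some j by move=> j x; rewrite /Su; case: ltnP.
have hv : valid_sched (modp p k q') (modr r s k) d (JC r s k u) Su.
  split.
  - move=> x j e; have [Jj hw] := h1 _ _ (SuS _ _ e); split=> //.
    move: Jj; rewrite /JC => /andP [-> /andP [-> _]] /=.
    by case/andP: hw => hw _; apply: leq_ltn_trans hw (Sub _ _); rewrite e.
  - move=> j Jj; case: (eqVneq j k) => [->|njk].
      rewrite /modp eqxx.
      rewrite (@count_upto Su k _ (d k) u (fun x e => Sub x ltac:(by rewrite e))); last by lia.
      rewrite (count_ext (S' := S)); last by move=> x /andP [_ xu]; rewrite /Su xu.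
      rewrite /q' (@count_from S k (modr r s k k)); last by move=> x /h1 [_ /andP []].
      by rewrite (@count_from S k (r s)) // => x ex; have /andP [] := busy x ltac:(by rewrite ex).
    move: Jj; rewrite /JC modr_ne // => /andP [/andP [j0 jk] /andP [sj ju]].
    have jk' : j < k by rewrite ltn_neqAle njk.
    have [_ hcu hsl] := hA j ltac:(lia) sj ltac:(lia).
    have JjC : JC r s k C j by rewrite /JC modr_ne // j0 jk sj /=; lia.
    rewrite modp_ne // -(modp_ne p q njk) -h2 // modr_ne //.
    apply: count_ext_ind => x _; rewrite /Su; case: ltnP => // ux.
    by case: (S x =P Some j) => [ex|_]; [have := hsl _ ex; lia | by []].
  - move=> x j e i Ji hri; case: (eqVneq i k) => [->|nik] hc.
      have [Jj _] := h1 _ _ (SuS _ _ e); move: Jj; rewrite /JC => /andP [/andP [j0 jk] _].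
      by apply: (dmono inst j0 jk); case/andP: hk.
    have xu := Sub x ltac:(by rewrite e).
    move: Ji; rewrite /JC => /andP [i0 /andP [si iu]].
    apply: (h3 _ _ (SuS _ _ e)); first by rewrite /JC i0 si /=; lia.
      by [].
    move: hc; rewrite !modp_ne // (count_ext (S' := S)) // => y /andP [_ yx].
    by rewrite /Su (ltn_trans yx xu).
exists Su; split.
- split.
  + rewrite modr_s; split; first by move=> x /Sub.
    case: (eqVneq u (r s)) => [eus|nus].
      left; split=> // x; rewrite /Su; case: ltnP => // xu.
      case E: (S x) => [j|] //; have := busy x ltac:(by rewrite E); lia.
    have hu0 : 0 < u by move/eqP: nus; lia.
    have hne : S u.-1 <> None.
      by case: hint => // e; rewrite e eqxx in nus.
    right; split=> //; rewrite /Su (prednK hu0) leqnn; exact: hne.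
  + lia.
  + by apply: valid_J_ext hv => j; rewrite /JC modr_s.
- rewrite leq_eqVlt; apply/orP; left; apply/eqP.
  apply: eq_big_nat => x /andP [_ xu]; rewrite /Su xu.
  by case: x xu => [|x] xu /=; [rewrite xu | rewrite (ltnW xu)].
Qed.

Definition isA (rs : nat) (r : nat -> nat) (k t : nat) : pred nat :=
  fun i => (0 < i < k) && (rs <= r i < t).

Definition stepN (S2 S : schedule) x0 t (A : pred nat) (p r : nat -> nat) k :=
  fun y (c : nat -> nat) => if y < x0 then S2 y else if y < t then pickA A p r k y c else S y.

Lemma pickA_ext A p r k y c c' : (forall i, c i = c' i) -> pickA A p r k y c = pickA A p r k y c'.
Proof.
move=> h; rewrite /pickA (@eq_find _ _ (fun i => A i && (r i <= y) && (c' i < p i))) //.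
by move=> i; rewrite h.
Qed.

Lemma Nval S2 S x0 t A p r k y :
  let N := Nsch (stepN S2 S x0 t A p r k) in
  N y = if y < x0 then S2 y else if y < t then pickA A p r k y (fun i => count_slots N i 0 y) else S y.
Proof.
move=> N; rewrite /N {1}/Nsch /stepN; case: ltnP => // _; case: ltnP => // _.
by apply: pickA_ext => i; rewrite cst_count.
Qed.

Lemma splice_contra n p r d s k g l q S C u t S2 C2 x0 :
  instance n p r d -> 0 < k <= n ->
  P_sched p r d s k g l q S C ->
  (forall q', q' < q -> forall S C, ~ P_sched p r d s k g l q' S C) ->
  u < t -> (forall x, u <= x < t -> S x = Some k) ->
  skp_sched p r d s k (count_slots S k (r s) u) S2 C2 ->
  gaps S2 (r s) C2 <= gaps S (r s) u -> u < C2 ->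
  r s <= x0 <= t -> x0 <= C2 ->
  let N := Nsch (stepN S2 S x0 t (isA (r s) r k t) p r k) in
  (forall y, x0 <= y < t -> forall j, N y = Some j ->
      (j = k -> modr r s k k <= y) /\ (j <> k -> y < d j)) ->
  (forall i, isA (r s) r k t i -> count_slots N i 0 t = p i) ->
  count_slots S2 k 0 x0 + count_slots N k x0 t < count_slots S k (r s) u + (t - u) ->
  False.
Proof.
move=> inst hk hP hmin hut hin hS2 hg2 huC2 /andP [hsx0 hx0t] hx0C2 N FP AD SAV.
case: (Pfacts hP) => busy [hCd [hCl [hpr [hg [hsC [h1 h2 h3]]]]]].
have [/andP [hsk hku] htC hA] := Sfacts inst hk hP hut hin.
case: (SKfacts hS2) => busy2 [hC2d [hsC2 [g1 g2 g3]]].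
set A := isA (r s) r k t.
have hAk : forall i, A i -> 0 < i < k by move=> i /andP [].
have hAJ : forall i, A i -> i != k by move=> i /hAk hi; apply/eqP => e; subst; lia.
have hAu : forall i, A i -> [/\ r i < u, count_slots S i (r i) u = p i & forall x, S x = Some i -> x < u].
  by move=> i /andP [hi /andP [h h']]; apply: hA.
have hAs : forall i, A i -> r s <= r i by move=> i /andP [_ /andP []].
have Nv : forall y, N y = if y < x0 then S2 y else if y < t then pickA A p r k y (fun i => count_slots N i 0 y) else S y.
  move=> y; exact: (Nval S2 S x0 t A p r k y).
have N1 : forall y, y < x0 -> N y = S2 y by move=> y hy; rewrite Nv hy.
have N2 : forall y, x0 <= y < t -> N y = pickA A p r k y (fun i => count_slots N i 0 y).
  by move=> y /andP [hy hy']; rewrite Nv ltnNge hy /= hy'.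
have N3 : forall y, t <= y -> N y = S y.
  by move=> y hy; rewrite Nv ltnNge (leq_trans hx0t hy) /= ltnNge hy.
have AJ2 : forall i, A i -> JC r s k C2 i.
  move=> i Ai; have [hiu _ _] := hAu i Ai; rewrite /JC modr_ne ?hAJ // hAs //=.
  have := hAk i Ai; lia.
have AJ : forall i, A i -> JC r s k C i.
  move=> i Ai; have [hiu _ _] := hAu i Ai; rewrite /JC modr_ne ?hAJ // hAs //=.
  have := hAk i Ai; lia.
have Rk0 : modr r s k k < C by lia.
have JCk : JC r s k C k by rewrite /JC hsk Rk0 leqnn; case/andP: hk => -> _.
have hN1 : forall y j, N y = Some j -> JC r s k C j /\ modr r s k j <= y < d j.
  move=> y j e; case: (ltnP y x0) => yx0.
    rewrite N1 // in e; have [Jj /andP [hw1 hw2]] := g1 _ _ e; split; last by rewrite hw1.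
    by move: Jj; rewrite /JC => /andP [-> /andP [-> _]] /=; lia.
  case: (ltnP y t) => yt; last by rewrite N3 // in e; apply: h1.
  have [fk fo] := FP y ltac:(lia) j e.
  rewrite N2 ?yx0 // in e; case: (pick_spec hAk e) => [[ejk _]|[Aj rj cj _]].
    by subst j; rewrite JCk fk //=; lia.
  rewrite AJ // modr_ne ?hAJ // rj /=; split=> //; apply: fo; apply/eqP; exact: hAJ.
have NR : forall y j, N y = Some j -> modr r s k j <= y by move=> y j /hN1 [_ /andP []].
have N0 : forall j b, count_slots N j (modr r s k j) b = count_slots N j 0 b.
  by move=> j b; apply: count_from => x /NR.
have S0 : forall j b, count_slots S j (modr r s k j) b = count_slots S j 0 b.
  by move=> j b; apply: count_from => x /h1 [_ /andP []].
have S20 : forall j b, count_slots S2 j (modr r s k j) b = count_slots S2 j 0 b.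
  by move=> j b; apply: count_from => x /g1 [_ /andP []].
have JnA : forall j, JC r s k C j -> j != k -> ~~ A j -> t <= r j.
  move=> j; rewrite /JC => /andP [/andP [j0 jk] /andP [sj _]] njk; rewrite modr_ne // in sj.
  rewrite /A /isA j0 sj /= (ltn_neqAle j k) njk jk /=; by rewrite -leqNgt.
set qN := count_slots N k (modr r s k k) (d k).
have h2N : forall j, JC r s k C j -> count_slots N j (modr r s k j) (d j) = modp p k qN j.
  move=> j Jj; case: (eqVneq j k) => [->|njk]; first by rewrite /modp eqxx.
  rewrite modp_ne //; case: (boolP (A j)) => Aj.
    rewrite N0.
    have sl1 : forall x, N x = Some j -> x < t.
      move=> x e; rewrite ltnNge; apply/negP => tx; rewrite N3 // in e.
      have [hu _ hsl] := hAu j Aj; have := hsl _ e; lia.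
    have sl2 : forall x, N x = Some j -> x < d j by move=> x /hN1 [_ /andP []].
    rewrite -(@count_upto N j 0 (maxn t (d j)) (d j) sl2) ?leq_maxr //.
    by rewrite (@count_upto N j 0 (maxn t (d j)) t sl1) ?leq_maxl // AD.
  have tj := JnA j Jj njk Aj.
  rewrite -(modp_ne p q njk) -h2 //; apply: count_ext => x /andP [hx _].
  by rewrite N3 //; apply: leq_trans hx; rewrite modr_ne.
have JA : forall i, JC r s k C i -> i != k -> r i < t -> A i.
  move=> i; rewrite /JC => /andP [/andP [i0 ik] /andP [si _]] nik it; rewrite modr_ne // in si.
  by rewrite /A /isA i0 si it (ltn_neqAle i k) nik ik.
have h3N : forall y j, N y = Some j -> forall i, JC r s k C i -> modr r s k i <= y ->
    count_slots N i (modr r s k i) y < modp p k qN i -> d j <= d i.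
  move=> y j e i Ji hri; case: (eqVneq i k) => [->|nik] hc.
    have [Jj _] := hN1 _ _ e; move: Jj; rewrite /JC => /andP [/andP [j0 jk] _].
    by apply: (dmono inst j0 jk); case/andP: hk.
  rewrite modp_ne // in hc; rewrite modr_ne // in hri hc.
  case: (ltnP y x0) => yx0.
    rewrite N1 // in e; have Ai : A i by apply: JA => //; lia.
    apply: (g3 _ _ e i (AJ2 i Ai)); first by rewrite modr_ne.
    rewrite modr_ne // modp_ne //; move: hc; rewrite (count_ext (S' := S2)) //.
    by move=> x /andP [_ xy]; apply: N1; lia.
  case: (ltnP y t) => yt.
    have Ai : A i by apply: JA => //; lia.
    have hc0 : count_slots N i 0 y < p i.
      by move: hc; rewrite (@count_from N i (r i)) // => x /NR; rewrite modr_ne.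
    rewrite N2 ?yx0 // in e; case: (pick_spec hAk e) => [[ejk hall]|[Aj rj cj hmn]].
      by have := hall i Ai hri; lia.
    have ji := hmn i Ai hri hc0.
    apply: (dmono inst _ ji); first by case/andP: (hAk j Aj).
    by case/andP: (hAk i Ai) => _ ik; case/andP: hk => _; lia.
  rewrite N3 // in e; case: (ltnP (r i) t) => it.
    have Ai := JA i Ji nik it.
    move: hc; rewrite (@count_from N i (r i)); last by move=> x /NR; rewrite modr_ne.
    have := @count_mono N i 0 t y yt; rewrite AD //; lia.
  apply: (h3 _ _ e i Ji); first by rewrite modr_ne.
  rewrite modr_ne // modp_ne //; move: hc; rewrite (count_ext (S' := S)) //.
  by move=> x /andP [hx _]; apply: N3; lia.
have busyN : forall y, N y <> None -> r s <= y < C.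
  move=> y; case E: (N y) => [j|] // _.
  have [Jj /andP [hw _]] := hN1 _ _ E.
  have sR : r s <= modr r s k j by move: Jj; rewrite /JC => /andP [_ /andP []].
  rewrite (leq_trans sR hw) /=.
  case: (ltnP y t) => yt; first by lia.
  by rewrite N3 // in E; have /andP [] := busy y ltac:(by rewrite E).
have Nbusy_fill : forall y, x0 <= y < t -> N y <> None.
  move=> y hy; rewrite N2 //; rewrite /pickA; by case: ifP.
have ht1 : S t.-1 = Some k by apply: hin; lia.
have hut2 : u <= t.-1 by lia.
have htl : t <= r l by lia.
have gS : gaps S (r s) u + gaps S t (r l) <= gaps S (r s) (r l).
  rewrite (@gaps_split S (r s) u (r l)) ?leq_add2l; try lia.
  rewrite (@big_cat_nat _ _ _ t) /=; try lia.
  apply: leq_trans (leq_addl _ _); rewrite leq_eqVlt; apply/orP; left; apply/eqP.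
  apply: eq_big_nat => x /andP [tx _]; rewrite /gterm.
  case: (eqVneq x t) => [->|nxt].
    by rewrite ht1 /= !orbT.
  have -> : (x == r s) = false by apply/eqP; lia.
  by [].
have gN : gaps N (r s) (r l) <= gaps S2 (r s) x0 + gaps S t (r l).
  rewrite (@gaps_split N (r s) x0 (r l)); try lia.
  rewrite (@big_cat_nat _ _ _ t) /=; try lia.
  have -> : \sum_(x0 <= i < t) gterm N (r s) i = 0.
    rewrite big1_seq // => x; rewrite mem_index_iota => hx; rewrite /gterm.
    by case E: (N x) (Nbusy_fill x hx) => [j|].
  rewrite add0n; apply: leq_add.
    rewrite leq_eqVlt; apply/orP; left; apply/eqP; apply: eq_big_nat => x /andP [_ xx0].
    rewrite /gterm N1 //; congr (_ && (_ || _)); rewrite N1 //; lia.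
  rewrite gapsE big_nat_cond [X in _ <= X]big_nat_cond; apply: leq_sum => x /andP [/andP [tx _] _]; rewrite /gterm N3 //.
  case: (eqVneq x t) => [->|nxt].
    by case: (S t == None) => //=; case: (_ || _).
  have -> : (x == r s) = false by apply/eqP; lia.
  rewrite N3; [by [] | lia].
have hgN : gaps N (r s) (r l) <= g.
  apply: (leq_trans gN); apply: (leq_trans _ (leq_trans gS hg)); rewrite leq_add2r.
  exact: leq_trans (gaps_mono _ _ hx0C2) hg2.
have hqN : qN < q.
  have hq : count_slots S k (modr r s k k) (d k) = q by rewrite h2 // /modp eqxx.
  have htd : t <= d k by lia.
  rewrite /qN N0 -hq S0.
  rewrite (@count_split N k 0 x0 (d k)) ?(@count_split N k x0 t (d k)) //; try lia.
  rewrite (@count_split S k 0 u (d k)) ?(@count_split S k u t (d k)) //; try lia.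
  rewrite (@count_ext N S2 k 0 x0); last by move=> x /andP [_ hx]; apply: N1.
  rewrite (@count_ext N S k t (d k)); last by move=> x /andP [hx _]; apply: N3.
  rewrite (@count_all S k u t) //.
  have -> : count_slots S k 0 u = count_slots S k (r s) u.
    by rewrite (@count_from S k (r s)) // => x ex; have /andP [] := busy x ltac:(by rewrite ex).
  lia.
have [C' hPN] := @shrink n p r d s k g l qN C N inst hk hsC hCd hCl hpr busyN
  (And3 hN1 h2N h3N) hgN.
exact: (hmin qN hqN N C' hPN).
Qed.

Lemma Nparts S2 S x0 t A p r k :
  let N := Nsch (stepN S2 S x0 t A p r k) in
  x0 <= t ->
  (forall y, y < x0 -> N y = S2 y) /\
  (forall y, x0 <= y < t -> N y = pickA A p r k y (fun i => count_slots N i 0 y)) /\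
  (forall y, t <= y -> N y = S y).
Proof.
move=> N hx0t; have Nv : forall y, N y = if y < x0 then S2 y else if y < t then pickA A p r k y (fun i => count_slots N i 0 y) else S y.
  move=> y; exact: (Nval S2 S x0 t A p r k y).
split; first by move=> y hy; rewrite Nv hy.
split; first by move=> y /andP [hy hy']; rewrite Nv ltnNge hy /= hy'.
by move=> y hy; rewrite Nv ltnNge (leq_trans hx0t hy) /= ltnNge hy.
Qed.

Lemma ivt (f : nat -> nat) a b v : (forall y, f y.+1 <= (f y).+1) -> a <= b ->
  f a <= v -> v <= f b -> exists y, a <= y <= b /\ f y = v.
Proof.
move=> hf; elim: b => [|b IH] ab fa vb.
  by exists 0; split; [lia | have e : a = 0 by lia]; rewrite e in fa; lia.
case: (leqP v (f b)) => vfb.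
  case: (eqVneq a b.+1) => [eab|neab].
    by exists b.+1; split; [lia | subst; lia].
  have [|y [hy fy]] := IH _ fa vfb; first by move/eqP: neab; lia.
  by exists y; split; [lia | done].
by exists b.+1; split; [lia | have := hf b; lia].
Qed.

Lemma count_le_p S j b e P : (forall x, S x = Some j -> x < e) -> count_slots S j 0 e = P ->
  count_slots S j 0 b <= P.
Proof.
move=> h <-; case: (leqP b e) => be; first exact: count_mono.
by rewrite (@count_upto S j 0 b e h (ltnW be)).
Qed.

Lemma skp_job p r d s k q S C i : skp_sched p r d s k q S C -> JC r s k C i -> i != k ->
  [/\ (forall x, S x = Some i -> r i <= x < d i /\ x < C),
      (forall b, count_slots S i 0 b <= p i),
      count_slots S i 0 C = p i & count_slots S i 0 (d i) = p i].
Proof.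
move=> hS Ji nik; case: (SKfacts hS) => busy [_ [_ [h1 h2 _]]].
have sl : forall x, S x = Some i -> r i <= x < d i /\ x < C.
  move=> x e; have [_] := h1 _ _ e; rewrite modr_ne // => hw; split=> //.
  by have /andP [] := busy x ltac:(by rewrite e).
have hd : count_slots S i 0 (d i) = p i.
  rewrite -(@count_from S i (r i)); last by move=> x /sl [/andP []].
  by have := h2 i Ji; rewrite modr_ne // modp_ne.
have hb : forall b, count_slots S i 0 b <= p i.
  by move=> b; apply: (@count_le_p S i b (d i)) => // x /sl [/andP []].
split=> //.
rewrite -(@count_upto S i 0 (maxn C (d i)) C) ?leq_maxl //; last by move=> x /sl [].
by rewrite (@count_upto S i 0 (maxn C (d i)) (d i)) ?leq_maxr // => x /sl [/andP []].
Qed.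

Lemma skp_k p r d s k q S C b : skp_sched p r d s k q S C -> count_slots S k 0 b <= q.
Proof.
move=> hS; case: (SKfacts hS) => busy [_ [_ [h1 h2 _]]].
case: (boolP (JC r s k C k)) => Jk.
  apply: (@count_le_p S k b (d k)); first by move=> x /h1 [_ /andP []].
  rewrite -(@count_from S k (modr r s k k)); last by move=> x /h1 [_ /andP []].
  by rewrite h2 // /modp eqxx.
by rewrite count_zero // => x _ /h1 [Jk' _]; rewrite Jk' in Jk.
Qed.

Lemma case_le n p r d s k g l q S C u t S2 C2 :
  instance n p r d -> 0 < k <= n -> P_sched p r d s k g l q S C ->
  (forall q', q' < q -> forall S C, ~ P_sched p r d s k g l q' S C) ->
  u < t -> (forall x, u <= x < t -> S x = Some k) ->
  skp_sched p r d s k (count_slots S k (r s) u) S2 C2 ->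
  gaps S2 (r s) C2 <= gaps S (r s) u -> u < C2 -> C2 <= t -> False.
Proof.
move=> inst hk hP hmin hut hin hS2 hg2 huC2 hC2t.
have [/andP [hsk hku] htC hA] := Sfacts inst hk hP hut hin.
have [N1 [N2 N3]] := @Nparts S2 S C2 t (isA (r s) r k t) p r k hC2t.
set A := isA (r s) r k t in N1 N2 N3.
set N := Nsch (stepN S2 S C2 t A p r k) in N1 N2 N3.
have hAk : forall i, A i -> 0 < i < k by move=> i /andP [].
have hAJ : forall i, A i -> i != k by move=> i /hAk hi; apply/eqP => e; subst; lia.
have AJ2 : forall i, A i -> JC r s k C2 i.
  move=> i Ai; case/andP: (Ai) => _ /andP [si it].
  have [hiu _ _] := hA i (hAk i Ai) si it.
  have := hAk i Ai; rewrite /JC modr_ne ?hAJ // si /=; lia.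
have Adone : forall i, A i -> count_slots N i 0 C2 = p i.
  move=> i Ai; have [_ _ hC _] := skp_job hS2 (AJ2 i Ai) (hAJ i Ai).
  by rewrite -hC; apply: count_ext => x /andP [_ hx]; apply: N1.
have Nfill : forall y, C2 <= y < t -> N y = Some k.
  move=> y hy; have := N2 y hy; case E: (pickA _ _ _ _ _ _) => [j|]; last by rewrite /pickA in E; case: ifP E.
  case: (pick_spec hAk E) => [[-> _] //|[Aj _ cj _]].
  by have := @count_mono N j 0 C2 y ltac:(lia); rewrite Adone //; lia.
have huk : modr r s k k <= u by [].
apply: (@splice_contra n p r d s k g l q S C u t S2 C2 C2 inst hk hP hmin hut hin hS2 hg2 huC2) => //.
- by apply/andP; split; lia.
- move=> y hy j; rewrite -/A -/N Nfill // => [[<-]]; split=> // _; lia.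
- move=> i Ai; rewrite (@count_split N i 0 C2 t) // Adone // count_zero ?addn0 //.
  by move=> x hx; rewrite Nfill // => [[e]]; move: (hAJ i Ai); rewrite e eqxx.
- rewrite -/A -/N (@count_all N k C2 t) //.
  by have := @skp_k _ _ _ _ _ _ _ _ C2 hS2; lia.
Qed.

Lemma count_succ0 S j y : count_slots S j 0 y.+1 = count_slots S j 0 y + (S y == Some j).
Proof. by rewrite count_succ. Qed.

Lemma case_gt n p r d s k g l q S C u t S2 C2 :
  instance n p r d -> 0 < k <= n -> P_sched p r d s k g l q S C ->
  (forall q', q' < q -> forall S C, ~ P_sched p r d s k g l q' S C) ->
  u < t -> (forall x, u <= x < t -> S x = Some k) ->
  skp_sched p r d s k (count_slots S k (r s) u) S2 C2 ->
  gaps S2 (r s) C2 <= gaps S (r s) u -> u < C2 -> t < C2 -> False.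
Proof.
move=> inst hk hP hmin hut hin hS2 hg2 huC2 htC2.
have [/andP [hsk hku] htC hA] := Sfacts inst hk hP hut hin.
case: (Pfacts hP) => busy [hCd [hCl [hpr [hg [hsC [h1 h2 h3]]]]]].
set A := isA (r s) r k t.
have hAk : forall i, A i -> 0 < i < k by move=> i /andP [].
have hAJ : forall i, A i -> i != k by move=> i /hAk hi; apply/eqP => e; subst; lia.
have hAu : forall i, A i -> [/\ r i < u, count_slots S i (r i) u = p i & forall x, S x = Some i -> x < u].
  by move=> i Ai; case/andP: (Ai) => _ /andP [si it]; apply: hA (hAk i Ai) si it.
have hAs : forall i, A i -> r s <= r i by move=> i /andP [_ /andP []].
have AJ2 : forall i, A i -> JC r s k C2 i.
  move=> i Ai; have [hiu _ _] := hAu i Ai.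
  have := hAk i Ai; rewrite /JC modr_ne ?hAJ // hAs //=; lia.
have cS2le : forall i b, A i -> count_slots S2 i 0 b <= p i.
  by move=> i b Ai; have [_ hb _ _] := skp_job hS2 (AJ2 i Ai) (hAJ i Ai); apply: hb.
have Sge : forall i x, S x = Some i -> i != k -> r i <= x.
  by move=> i x e nik; have [_] := h1 _ _ e; rewrite modr_ne // => /andP [].
have pS : forall i a, A i -> a <= r i -> p i = count_slots S i a u.
  move=> i a Ai ai; have [_ hc _] := hAu i Ai.
  rewrite -hc (@count_from S i (r i)); last by move=> x e; apply: Sge e (hAJ i Ai).
  by rewrite (@count_from S i a) // => x e; apply: leq_trans ai (Sge _ _ e (hAJ i Ai)).
set Arem := fun (X : schedule) y => \sum_(1 <= i < k | A i) (p i - count_slots X i 0 y).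
set f := fun y => y + Arem S2 y.
have fstep : forall y, f y.+1 <= (f y).+1.
  move=> y; rewrite /f /Arem -addSn leq_add2l; apply: leq_sum => i _.
  by apply: leq_sub2l; apply: count_mono.
have frs : f (r s) <= u.
  rewrite /f; have : Arem S2 (r s) <= u - r s.
    apply: leq_trans (sum_jobs_le S 1 k A (r s) u); apply: leq_sum => i Ai.
    by rewrite -pS ?hAs // leq_subr.
  lia.
have hsu : r s <= u by lia.
case: (leqP (f t) t) => ft.
  have [N1 [N2 N3]] := @Nparts S2 S t t A p r k (leqnn t).
  set N := Nsch (stepN S2 S t t A p r k) in N1 N2 N3.
  apply: (@splice_contra n p r d s k g l q S C u t S2 C2 t inst hk hP hmin hut hin hS2 hg2 huC2) => //.
  - by apply/andP; split; lia.
  - lia.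
  - by move=> y; lia.
  - move=> i Ai; rewrite -/A -/N (@count_ext N S2 i 0 t); last by move=> x /andP [_ hx]; apply: N1.
    apply/eqP; rewrite eqn_leq cS2le //=.
    have : Arem S2 t = 0 by rewrite /f in ft; lia.
    move=> /(sum_eq0_term (j := i)) => /(_ ltac:(have := hAk i Ai; lia) Ai); lia.
  - have -> : count_slots N k t t = 0 by rewrite /count_slots big_geq.
    by have := @skp_k _ _ _ _ _ _ _ _ t hS2; lia.
have hst : r s <= t by lia.
have [x0 [/andP [hx0a hx0b] fx0]] := ivt fstep hst (leq_trans frs (ltnW hut)) (ltnW ft).
have hx0t : x0 < t by rewrite ltn_neqAle hx0b andbT; apply/eqP => e; subst x0; lia.
have [N1 [N2 N3]] := @Nparts S2 S x0 t A p r k hx0b.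
set N := Nsch (stepN S2 S x0 t A p r k) in N1 N2 N3.
have cx0 : forall i, count_slots N i 0 x0 = count_slots S2 i 0 x0.
  by move=> i; apply: count_ext => x /andP [_ hx]; apply: N1.
have Nsome : forall y, x0 <= y < t -> exists j, N y = Some j.
  by move=> y hy; rewrite N2 // /pickA; case: ifP => _; eexists.
have I1 : forall m, x0 + m <= t -> forall i, A i -> count_slots N i 0 (x0 + m) <= p i.
  elim=> [|m IH] hm i Ai; first by rewrite addn0 cx0 cS2le.
  rewrite addnS count_succ0; have [j ej] := Nsome (x0 + m) ltac:(lia).
  rewrite ej; case: (eqVneq j i) => [eji|nji]; last first.
    have -> : (Some j == Some i) = false by apply/eqP => [[e]]; rewrite e eqxx in nji.
    by rewrite addn0 IH //; lia.
  subst j; rewrite eqxx addn1; move: ej; rewrite N2; last by lia.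
  by case/(pick_spec hAk) => [[e _]|[_ _ ci _]] //; move: (hAJ i Ai); rewrite e eqxx.
have bound : forall y, (forall i, A i -> r i <= y -> p i <= count_slots N i 0 y) ->
    Arem N y <= u - y.+1.
  move=> y hall; apply: leq_trans (sum_jobs_le S 1 k (fun i => A i && (y < r i)) y.+1 u).
  rewrite /Arem big_mkcond [X in _ <= X]big_mkcond /=; apply: leq_sum => i _.
  case Ai: (A i) => //=.
  case: (ltnP y (r i)) => yr; first by rewrite -pS // leq_subr.
  by rewrite (eqP (_ : p i - _ == 0)) // subn_eq0 hall.
have pickAt : forall y, x0 <= y < t -> Arem N y = t - y ->
    exists j, [/\ N y = Some j, A j, r j <= y, count_slots N j 0 y < p j &
      forall i, A i -> r i <= y -> count_slots N i 0 y < p i -> j <= i].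
  move=> y hy hrem; have [j ej] := Nsome y hy; exists j.
  have ep : pickA A p r k y (fun i => count_slots N i 0 y) = Some j by rewrite -N2.
  case: (pick_spec hAk ep) => [[ejk hall]|[Aj rj cj hmn]].
    by have := bound y hall; lia.
  by split.
have I2 : forall m, x0 + m <= t -> Arem N (x0 + m) = t - (x0 + m).
  elim=> [|m IH] hm.
    rewrite addn0 /Arem; rewrite /f /Arem in fx0.
    have -> : \sum_(1 <= i < k | A i) (p i - count_slots N i 0 x0) =
              \sum_(1 <= i < k | A i) (p i - count_slots S2 i 0 x0).
      by apply: eq_bigr => i _; rewrite cx0.
    lia.
  have [j [ej Aj rj cj _]] := pickAt (x0 + m) ltac:(lia) (IH ltac:(lia)).
  suff : Arem N (x0 + m) = Arem N (x0 + m.+1) + 1 by move: (IH ltac:(lia)); lia.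
  rewrite /Arem addnS.
  have -> : \sum_(1 <= i < k | A i) (p i - count_slots N i 0 (x0 + m)) =
            \sum_(1 <= i < k | A i) ((p i - count_slots N i 0 (x0 + m).+1) + (N (x0 + m) == Some i)).
    apply: eq_bigr => i Ai; have := I1 m.+1 ltac:(lia) i Ai; rewrite addnS count_succ0; lia.
  rewrite big_split /=.
  have -> : \sum_(1 <= i < k | A i) ((N (x0 + m) == Some i) : nat) = 1.
    apply/eqP; rewrite eqn_leq sum_ind_le /=.
    apply: leq_trans (term_le_sum (fun i => (N (x0 + m) == Some i) : nat) _ _); last exact: Aj.
      by rewrite ej eqxx.
    by have := hAk j Aj; lia.
  by rewrite addn0 addn1 addnS.
have pickAt' : forall y, x0 <= y < t ->
    exists j, [/\ N y = Some j, A j, r j <= y, count_slots N j 0 y < p j &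
      forall i, A i -> r i <= y -> count_slots N i 0 y < p i -> j <= i].
  move=> y hy; apply: pickAt => //; have := I2 (y - x0) ltac:(lia).
  by rewrite subnKC //; case/andP: hy.
set W := fun (X : schedule) j y => \sum_(1 <= i < k | A i && (i <= j)) count_slots X i 0 y.
have Wsucc : forall X j y, W X j y.+1 = W X j y + \sum_(1 <= i < k | A i && (i <= j)) ((X y == Some i) : nat).
  move=> X j y; rewrite /W -big_split /=; apply: eq_bigr => i _; exact: count_succ0.
have I3 : forall j m, x0 + m <= t -> W S2 j (x0 + m) <= W N j (x0 + m).
  move=> j; elim=> [|m IH] hm.
    by rewrite addn0 /W; apply: leq_sum => i _; rewrite cx0.
  have [js [ej Aj rj cj hmn]] := pickAt' (x0 + m) ltac:(lia).
  rewrite addnS; case: (leqP js j) => hjs.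
    rewrite !Wsucc; have := IH ltac:(lia); have := sum_ind_le (S2 (x0 + m)) 1 k (fun i => A i && (i <= j)).
    have : 1 <= \sum_(1 <= i < k | A i && (i <= j)) ((N (x0 + m) == Some i) : nat).
      have hjr : 1 <= js < k by have := hAk js Aj; lia.
      have := @term_le_sum (fun i => (N (x0 + m) == Some i) : nat) (fun i => A i && (i <= j)) 1 k js hjr.
      by rewrite /= Aj hjs ej eqxx => /(_ isT).
    lia.
  rewrite /W; apply: leq_sum => i /andP [Ai ij].
  case: (leqP (r i) (x0 + m)) => ri.
    have hp : p i <= count_slots N i 0 (x0 + m).
      rewrite leqNgt; apply/negP => lt; have := hmn i Ai ri lt; lia.
    apply: leq_trans (cS2le i _ Ai) _; apply: leq_trans hp _; exact: count_mono.
  rewrite (@count_zero S2 i 0) //; move=> x /andP [_ hx] e.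
  have [sl _ _ _] := skp_job hS2 (AJ2 i Ai) (hAJ i Ai).
  have [/andP [h _] _] := sl x e; lia.
have deadline : forall y j, x0 <= y < t -> N y = Some j -> y < d j.
  move=> y j hy e; have [js [ej Aj rj cj hmn]] := pickAt' y hy.
  rewrite ej in e; case: e => e; subst js.
  rewrite ltnNge; apply/negP => djy.
  set y' := maxn x0 (d j).
  have hy' : y' <= y by rewrite geq_max; case/andP: hy => -> _.
  have := I3 j (y' - x0) ltac:(lia); rewrite subnKC ?leq_maxl // => hW.
  have hjn : j <= n by have := hAk j Aj; case/andP: hk => _; lia.
  have hsp : \sum_(1 <= i < k | A i && (i <= j)) p i <= W N j y'.
    apply: leq_trans hW; rewrite /W; apply: leq_sum => i /andP [Ai ij].
    have [_ _ _ hdi] := skp_job hS2 (AJ2 i Ai) (hAJ i Ai).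
    rewrite -{1}hdi; apply: count_mono; apply: leq_trans (leq_maxr x0 (d j)).
    by apply: (dmono inst _ ij hjn); case/andP: (hAk i Ai).
  have hz : \sum_(1 <= i < k | A i && (i <= j)) (p i - count_slots N i 0 y') = 0.
    rewrite sumnB; first by apply/eqP; rewrite subn_eq0; exact: hsp.
    move=> i /andP [Ai _].
    have hm : x0 + (y' - x0) <= t by lia.
    by have := I1 _ hm i Ai; rewrite subnKC ?leq_maxl.
  have hjr : 1 <= j < k by have := hAk j Aj; lia.
  have := @sum_eq0_term (fun i => p i - count_slots N i 0 y') (fun i => A i && (i <= j)) 1 k j hz hjr.
  rewrite /= Aj leqnn => /(_ isT).
  have := @count_mono N j 0 y' y hy'; lia.
apply: (@splice_contra n p r d s k g l q S C u t S2 C2 x0 inst hk hP hmin hut hin hS2 hg2 huC2) => //.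
- by rewrite hx0a hx0b.
- lia.
- move=> y hy j e; rewrite -/A -/N in e.
  have [js [ej Aj _ _ _]] := pickAt' y hy; rewrite ej in e; case: e => e; subst js.
  split; first by move=> ejk; move: (hAJ j Aj); rewrite ejk eqxx.
  by move=> _; apply: deadline ej.
- move=> i Ai; rewrite -/A -/N.
  have := I2 (t - x0) ltac:(lia); rewrite subnKC // subnn => h0.
  have hir : 1 <= i < k by have := hAk i Ai; lia.
  have := @sum_eq0_term (fun i => p i - count_slots N i 0 t) A 1 k i h0 hir Ai.
  have := I1 (t - x0) ltac:(lia) i Ai; rewrite subnKC //; lia.
- rewrite -/A -/N (@count_zero N k x0 t); last first.
    move=> x hx e; have [js [ej Aj _ _ _]] := pickAt' x hx; rewrite ej in e; case: e => e.
    by move: (hAJ js Aj); rewrite e eqxx.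
  by have := @skp_k _ _ _ _ _ _ _ _ x0 hS2; lia.
Qed.

Unset Implicit Arguments.

Theorem lemma10 (n : nat) (p r d : nat -> nat) (s k g l q : nat)
  (S : schedule) (C : nat) :
  instance n p r d ->
  1 <= s <= n -> 1 <= k <= n -> 1 <= l <= k.-1 -> r s <= r l ->
  IsP p r d s k g l q ->
  P_sched p r d s k g l q S C ->
  ((forall u v, exec_interval S k u v -> internal S (r s) (r l) u v) /\
   (0 < q -> gaps S (r s) (r l) = g)) /\
  (forall u t, exec_interval S k u t ->
     IsU p r d s k (gaps S (r s) u) (count_slots S k (r s) u) u).
Proof.
move=> inst hs hk hl hsl hIsP hP.
have hA := partA inst hs hk hl hsl hIsP hP.
split=> // u t hex; case: hA => [hint _].
split; first exact: partB_exists inst hk hP hex (hint u t hex).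
move=> S2 C2 hS2 hg2; rewrite leqNgt; apply/negP => huC2.
case: hIsP => _ hmin.
case: hex => hut hin _ _.
case: (leqP C2 t) => hC2t.
  exact: (case_le inst hk hP hmin hut hin hS2 hg2 huC2 hC2t).
exact: (case_gt inst hk hP hmin hut hin hS2 hg2 huC2 hC2t).
Qed.
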